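(* Let $K\le P$ be positive integers, $\theta=(K,P)$, and suppose $p(\theta)>0$. Then for every $n\ge3$, $$\frac{\mathbb{E}[T_n(\theta)]}{\mathbb{E}[T_n(p(\theta))]}=\frac{C_{\rm K}(\theta)}{p(\theta)}=1+\frac{q(\theta)^2-r(\theta)}{(1-q(\theta))^3}\,q(\theta)\ \ge 1,$$ with equality if and only if $P<2K$; moreover, if $2K\le P<3K$ this ratio equals $1+\big(q(\theta)/(1-q(\theta))\big)^3$.
   Context: Random key graph: each of $n$ nodes receives independently a uniformly random $K$-element subset of $\{1,\dots,P\}$, distinct nodes being adjacent iff their subsets intersect; $T_n(\theta)$ is its number of triangles. $q(\theta)=\binom{P-K}{K}/\binom{P}{K}$ if $2K\le P$ and $0$ otherwise; $p(\theta)=1-q(\theta)$ (the edge probability); $r(\theta)=\binom{P-2K}{K}/\binom{P}{K}$ if $3K\le P$ and $0$ otherwise; $\beta(\theta)=(1-q)^3+q^3-qr$; $C_{\rm K}(\theta)=\beta(\theta)/(1-q(\theta))^2$. $T_n(p)$ is the number of triangles of the Erdős–Rényi graph $\mathbb{G}(n;p)$ (edges independent with probability $p$), whose clustering coefficient is $C_{\rm ER}(p)=p$. *)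

(* Defs.v *)
From HB Require Import structures.
From mathcomp Require Import all_boot all_order all_algebra.
Set Implicit Arguments. Unset Strict Implicit. Unset Printing Implicit Defensive.
Import Order.TTheory GRing.Theory Num.Theory.
Local Open Scope ring_scope.

Definition triangles (n : nat) (adj : rel 'I_n) : nat :=
  #|[set t : 'I_n * 'I_n * 'I_n |
       [&& (t.1.1 < t.1.2)%N, (t.1.2 < t.2)%N,
           adj t.1.1 t.1.2, adj t.1.2 t.2 & adj t.1.1 t.2]]|.

Definition key_assignments (n K P : nat) : {set {ffun 'I_n -> {set 'I_P}}} :=
  [set f : {ffun 'I_n -> {set 'I_P}} | [forall i : 'I_n, #|f i| == K]].

Definition rkg_adj (n P : nat) (f : {ffun 'I_n -> {set 'I_P}}) : rel 'I_n :=
  fun i j => (i != j) && ~~ [disjoint f i & f j].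

(* E[T_n(theta)], the assignment being uniform over key_assignments *)
Definition ET_rkg (n K P : nat) : rat :=
  (\sum_(f in key_assignments n K P) (triangles (rkg_adj f))%:R)
    / (#|key_assignments n K P|)%:R.

(* potential edges {i,j} represented as pairs (i,j) with i < j *)
Definition pairs (n : nat) : {set 'I_n * 'I_n} := [set e : 'I_n * 'I_n | (e.1 < e.2)%N].

Definition er_adj (n : nat) (g : {set 'I_n * 'I_n}) : rel 'I_n :=
  fun i j => ((i, j) \in g) || ((j, i) \in g).

Definition er_weight (n : nat) (p : rat) (g : {set 'I_n * 'I_n}) : rat :=
  \prod_(e in pairs n) (if e \in g then p else 1 - p).

Definition ET_er (n : nat) (p : rat) : rat :=
  \sum_(g : {set 'I_n * 'I_n} | g \subset pairs n)
     er_weight p g * (triangles (er_adj g))%:R.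

Definition q_th (K P : nat) : rat :=
  if (2 * K <= P)%N then ('C(P - K, K))%:R / ('C(P, K))%:R else 0.
Definition p_th (K P : nat) : rat := 1 - q_th K P.
Definition r_th (K P : nat) : rat :=
  if (3 * K <= P)%N then ('C(P - 2 * K, K))%:R / ('C(P, K))%:R else 0.
Definition beta_th (K P : nat) : rat :=
  (1 - q_th K P) ^+ 3 + q_th K P ^+ 3 - q_th K P * r_th K P.
Definition CK (K P : nat) : rat := beta_th K P / (1 - q_th K P) ^+ 2.

(* Main.v *)
Require Import Defs.
From HB Require Import structures.
From mathcomp Require Import all_boot all_order all_algebra.
From mathcomp Require Import ring lra zify.
Set Implicit Arguments. Unset Strict Implicit. Unset Printing Implicit Defensive.
Import Order.TTheory GRing.Theory Num.Theory.
Local Open Scope ring_scope.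

Definition ind (b : bool) : rat := if b then 1 else 0.

Lemma sum_ind_eq (J : finType) (w : J -> rat) a :
  \sum_x w x * ind (x == a) = w a.
Proof.
rewrite (bigD1 a) //= eqxx /ind mulr1 big1 ?addr0 // => x /negbTE ->.
by rewrite mulr0.
Qed.

Lemma sum_ind_eq' (J : finType) (G : J -> rat) x :
  \sum_a ind (x == a) * G a = G x.
Proof.
rewrite -(sum_ind_eq G x); apply: eq_bigr => a _; rewrite mulrC eq_sym //.
Qed.

Lemma prod_if1 (I : finType) (i : I) (F : I -> rat) :
  \prod_l (if l == i then F l else 1) = F i.
Proof. by rewrite -big_mkcond big_pred1_eq. Qed.

Lemma marg3 (I J : finType) (w : I -> J -> rat) (i j k : I)
    (H : J -> J -> J -> rat) :
  i != j -> j != k -> i != k ->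
  (\sum_(f : {ffun I -> J}) (\prod_l w l (f l)) * H (f i) (f j) (f k))
    * ((\sum_x w i x) * (\sum_x w j x) * (\sum_x w k x)) =
  (\sum_a \sum_b \sum_c w i a * w j b * w k c * H a b c)
    * \sum_(f : {ffun I -> J}) \prod_l w l (f l).
Proof.
move=> nij njk nik.
have nji : j != i by rewrite eq_sym.
have nkj : k != j by rewrite eq_sym.
have nki : k != i by rewrite eq_sym.
pose h l := if (l == i) || (l == j) || (l == k) then 1 else \sum_x w l x.
have Htot : \sum_(f : {ffun I -> J}) \prod_l w l (f l) =
   (\sum_x w i x) * (\sum_x w j x) * (\sum_x w k x) * \prod_l h l.
  rewrite -bigA_distr_bigA /=.
  rewrite (eq_bigr (fun l => (if l == i then \sum_x w i x else 1)
     * (if l == j then \sum_x w j x else 1)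
     * (if l == k then \sum_x w k x else 1) * h l)); last first.
    move=> l _; rewrite /h.
    have [->|li] := eqVneq l i; first by rewrite ?eqxx ?(negbTE nij) ?(negbTE nik) /= !mulr1.
    have [->|lj] := eqVneq l j; first by rewrite ?eqxx ?(negbTE nji) ?(negbTE njk) /= !mulr1 mul1r.
    have [->|lk] := eqVneq l k; first by rewrite ?eqxx ?(negbTE nki) ?(negbTE nkj) /= !mulr1 !mul1r.
    by rewrite ?(negbTE li) ?(negbTE lj) ?(negbTE lk) /= !mul1r.
  by rewrite !big_split /= !prod_if1.
pose e (l : I) (x a b c : J) := (if l == i then ind (x == a) else 1)
   * (if l == j then ind (x == b) else 1) * (if l == k then ind (x == c) else 1).
have H1 : \sum_(f : {ffun I -> J}) (\prod_l w l (f l)) * H (f i) (f j) (f k) =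
   \sum_a \sum_b \sum_c H a b c * \sum_(f : {ffun I -> J}) \prod_l (w l (f l) * e l (f l) a b c).
  transitivity (\sum_(f : {ffun I -> J}) \sum_a \sum_b \sum_c
     H a b c * \prod_l (w l (f l) * e l (f l) a b c)).
    apply: eq_bigr => f _.
    transitivity (\sum_a ind (f i == a) * \sum_b ind (f j == b) * \sum_c ind (f k == c)
        * ((\prod_l w l (f l)) * H a b c)).
      by rewrite !sum_ind_eq'.
    apply: eq_bigr => a _; rewrite [in LHS]mulr_sumr; apply: eq_bigr => b _.
    rewrite [in LHS]mulr_sumr [in LHS]mulr_sumr; apply: eq_bigr => c _.
    rewrite big_split /= /e !big_split /= !prod_if1; ring.
  rewrite exchange_big; apply: eq_bigr => a _.
  rewrite exchange_big; apply: eq_bigr => b _.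
  rewrite exchange_big; apply: eq_bigr => c _.
  by rewrite mulr_sumr.
rewrite H1 Htot.
have H2 a b c : \sum_(f : {ffun I -> J}) \prod_l (w l (f l) * e l (f l) a b c) =
   w i a * w j b * w k c * \prod_l h l.
  rewrite -(bigA_distr_bigA (fun l x => w l x * e l x a b c)) /=.
  rewrite (eq_bigr (fun l => (if l == i then w i a else 1)
     * (if l == j then w j b else 1)
     * (if l == k then w k c else 1) * h l)); last first.
    move=> l _; rewrite /h /e.
    have [->|li] := eqVneq l i.
      rewrite ?eqxx ?(negbTE nij) ?(negbTE nik) /= !mulr1.
      by under eq_bigr do rewrite !mulr1; rewrite sum_ind_eq.
    have [->|lj] := eqVneq l j.
      rewrite ?eqxx ?(negbTE nji) ?(negbTE njk) /= !mulr1 mul1r.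
      by under eq_bigr do rewrite !mulr1 mul1r; rewrite sum_ind_eq.
    have [->|lk] := eqVneq l k.
      rewrite ?eqxx ?(negbTE nki) ?(negbTE nkj) /= !mulr1 !mul1r.
      by under eq_bigr do rewrite !mul1r; rewrite sum_ind_eq.
    rewrite ?(negbTE li) ?(negbTE lj) ?(negbTE lk) /= !mul1r.
    by under eq_bigr do rewrite !mulr1.
  by rewrite !big_split /= !prod_if1.
have -> : \sum_a \sum_b \sum_c H a b c * \sum_(f : {ffun I -> J}) \prod_l (w l (f l) * e l (f l) a b c) =
   \sum_a \sum_b \sum_c H a b c * (w i a * w j b * w k c * \prod_l h l).
  by apply: eq_bigr => a _; apply: eq_bigr => b _; apply: eq_bigr => c _; rewrite H2.
move: (\sum_x w i x) (\sum_x w j x) (\sum_x w k x) (\prod_l h l) => Si Sj Sk Ph.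
rewrite !mulr_suml; apply: eq_bigr => a _; rewrite !mulr_suml; apply: eq_bigr => b _.
rewrite !mulr_suml; apply: eq_bigr => c _; ring.
Qed.


Lemma sum_in_ind (T : finType) (A : {set T}) (Q : pred T) :
  \sum_(x in A) ind (Q x) = (#|[set x in A | Q x]|)%:R.
Proof.
rewrite -sum1_card natr_sum [RHS]big_mkcond [LHS]big_mkcond.
apply: eq_bigr => x _; rewrite inE /ind; by case: (x \in A); case: (Q x).
Qed.

Definition SK (K P : nat) := [set X : {set 'I_P} | #|X| == K].
Definition dj (P : nat) (a b : {set 'I_P}) := ind [disjoint a & b].

Lemma card_SK K P : #|SK K P| = 'C(P, K).
Proof. by rewrite card_draws card_ord. Qed.

Lemma sum_dj K P (a : {set 'I_P}) : a \in SK K P ->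
  \sum_(b in SK K P) dj a b = ('C(P - K, K))%:R.
Proof.
rewrite inE => /eqP ha; rewrite /dj sum_in_ind.
rewrite (_ : P - K = #|~: a|)%N; last by have := cardsC a; rewrite card_ord ha; lia.
rewrite -cards_draws; congr (_ %:R).
apply: eq_card => b; rewrite !inE disjoint_sym disjoints_subset; by rewrite andbC.
Qed.

Lemma sum_dj' K P (a : {set 'I_P}) : a \in SK K P ->
  \sum_(b in SK K P) dj b a = ('C(P - K, K))%:R.
Proof.
move=> Ha; rewrite -(sum_dj Ha); apply: eq_bigr => b _; by rewrite /dj disjoint_sym.
Qed.

Lemma sum_dj2 K P (a b : {set 'I_P}) : a \in SK K P -> b \in SK K P ->
  [disjoint a & b] ->
  \sum_(c in SK K P) dj a c * dj b c = ('C(P - 2 * K, K))%:R.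
Proof.
rewrite !inE => /eqP ha /eqP hb dab.
rewrite (eq_bigr (fun c : {set 'I_P} => ind (c \subset ~: (a :|: b)))); last first.
  move=> c _; rewrite /dj setCU subsetI -!disjoints_subset !(disjoint_sym c).
  by rewrite /ind; case: [disjoint a & c]; case: [disjoint b & c]; rewrite ?mulr1 ?mulr0.
rewrite sum_in_ind.
rewrite (_ : P - 2 * K = #|~: (a :|: b)|)%N; last first.
  have := cardsC (a :|: b); rewrite card_ord cardsU (disjoint_setI0 dab) cards0 ha hb.
  lia.
rewrite -cards_draws; congr (_ %:R).
apply: eq_card => c; rewrite !inE; by rewrite andbC.
Qed.

Definition Hr P (a b c : {set 'I_P}) :=
  ind (~~ [disjoint a & b] && ~~ [disjoint b & c] && ~~ [disjoint a & c]).

Lemma tau_val K P (S D1 D2 : rat) :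
  S = ('C(P,K))%:R -> D1 = ('C(P-K,K))%:R -> D2 = ('C(P-2*K,K))%:R ->
  \sum_(a in SK K P) \sum_(b in SK K P) \sum_(c in SK K P) Hr a b c =
  S ^+ 3 - 3 * S ^+ 2 * D1 + 3 * S * D1 ^+ 2 - S * D1 * D2.
Proof.
move=> HS HD1 HD2.
have HrE a b c : Hr a b c = (1 - dj a b) * ((1 - dj b c) * (1 - dj a c)).
  rewrite /Hr /dj /ind.
  by case: [disjoint a & b]; case: [disjoint b & c]; case: [disjoint a & c];
     rewrite /= ?subrr ?subr0 ?mulr0 ?mul0r ?mulr1.
pose E (a b : {set 'I_P}) := \sum_(c in SK K P) dj a c * dj b c.
have step1 a b : a \in SK K P -> b \in SK K P ->
    \sum_(c in SK K P) Hr a b c = (1 - dj a b) * (S - 2 * D1 + E a b).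
  move=> Ha Hb; under eq_bigr do rewrite HrE; rewrite -mulr_sumr; congr (_ * _).
  transitivity (\sum_(c in SK K P) (1 - dj b c - dj a c + dj a c * dj b c)).
    by apply: eq_bigr => c _; ring.
  rewrite big_split !sumrB /= sumr_const card_SK (sum_dj Ha) (sum_dj Hb) -HS -HD1 /E.
  ring.
have step2 a : a \in SK K P ->
    \sum_(b in SK K P) (1 - dj a b) * (S - 2 * D1 + E a b)
    = (S - D1) * (S - 2 * D1) - D1 * D2 + \sum_(b in SK K P) E a b.
  move=> Ha.
  transitivity (\sum_(b in SK K P) ((S - 2 * D1) * (1 - dj a b) - dj a b * D2 + E a b)).
    apply: eq_bigr => b Hb; rewrite /dj /ind.
    case dab: [disjoint a & b].
      by rewrite /E (sum_dj2 Ha Hb dab) -HD2; ring.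
    ring.
  rewrite big_split !sumrB /= -mulr_sumr -mulr_suml sumrB sumr_const card_SK.
  rewrite (sum_dj Ha) -HS -HD1; ring.
have step3 : \sum_(a in SK K P) \sum_(b in SK K P) E a b = S * D1 ^+ 2.
  rewrite /E.
  transitivity (\sum_(c in SK K P) \sum_(a in SK K P) \sum_(b in SK K P) dj a c * dj b c).
    rewrite exchange_big /=.
    transitivity (\sum_(b in SK K P) \sum_(c in SK K P) \sum_(a in SK K P) dj a c * dj b c).
      by apply: eq_bigr => b _; rewrite exchange_big.
    by rewrite exchange_big; apply: eq_bigr => c _; rewrite exchange_big.
  transitivity (\sum_(c in SK K P) D1 ^+ 2).
    apply: eq_bigr => c Hc.
    under eq_bigr do rewrite -mulr_sumr.
    by rewrite -mulr_suml (sum_dj' Hc) -HD1 expr2.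
  by rewrite sumr_const card_SK -mulr_natl -HS.
transitivity (\sum_(a in SK K P) ((S - D1) * (S - 2 * D1) - D1 * D2 + \sum_(b in SK K P) E a b)).
  apply: eq_bigr => a Ha; rewrite -(step2 a Ha); apply: eq_bigr => b Hb; exact: step1.
rewrite big_split /= step3 sumr_const card_SK -[_ *+ 'C(P,K)]mulr_natl -HS; ring.
Qed.


Lemma er_marg n (p : rat) (e1 e2 e3 : 'I_n * 'I_n) :
  e1 != e2 -> e2 != e3 -> e1 != e3 ->
  e1 \in pairs n -> e2 \in pairs n -> e3 \in pairs n ->
  \sum_(g : {set 'I_n * 'I_n} | g \subset pairs n)
     er_weight p g * ind ((e1 \in g) && (e2 \in g) && (e3 \in g)) = p ^+ 3.
Proof.
move=> n12 n23 n13 H1 H2 H3.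
pose w (e : 'I_n * 'I_n) (b : bool) :=
  if e \in pairs n then (if b then p else 1 - p) else ind (~~ b).
have Sw e : \sum_b w e b = 1.
  rewrite big_bool /w; case: (e \in pairs n); rewrite /ind /=; ring.
have := marg3 w (fun a b c => ind (a && b && c)) n12 n23 n13.
rewrite !Sw !mulr1.
have -> : \sum_(f : {ffun 'I_n * 'I_n -> bool}) \prod_l w l (f l) = 1.
  by rewrite -bigA_distr_bigA; rewrite big1 // => l _; rewrite Sw.
rewrite mulr1 => Hm.
transitivity (\sum_(f : {ffun 'I_n * 'I_n -> bool})
    (\prod_l w l (f l)) * ind (f e1 && f e2 && f e3)); last first.
  rewrite Hm !big_bool /w H1 H2 H3 /ind /=; ring.
have hbij : bijective (fun g : {set 'I_n * 'I_n} => [ffun e => e \in g]).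
  exists (fun f : {ffun 'I_n * 'I_n -> bool} => [set e | f e]).
    by move=> g; apply/setP => e; rewrite inE ffunE.
  by move=> f; apply/ffunP => e; rewrite ffunE inE.
rewrite (reindex _ (onW_bij _ hbij)) /= big_mkcond /=.
apply: eq_bigr => g _; rewrite !ffunE.
have -> : \prod_l w l ([ffun e => e \in g] l) = er_weight p g * ind (g \subset pairs n).
  rewrite (bigID (fun l => l \in pairs n)) /=; congr (_ * _).
    by apply: eq_bigr => l Hl; rewrite ffunE /w Hl.
  case: (boolP (g \subset pairs n)) => Hg.
    rewrite big1 // => l Hl; rewrite ffunE /w (negbTE Hl) /ind.
    case: (boolP (l \in g)) => // Hlg; by rewrite (subsetP Hg l Hlg) in Hl.
  case/subsetPn: Hg => l Hlg Hl.
  by rewrite (bigD1 l) //= ffunE /w (negbTE Hl) Hlg /ind mul0r.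
by case: (g \subset pairs n); rewrite /ind ?mulr1 ?mulr0 ?mul0r.
Qed.


Lemma card_ind (T : finType) (A : {pred T}) :
  (#|A|)%:R = \sum_x ind (x \in A) :> rat.
Proof.
rewrite -sum1_card natr_sum big_mkcond; apply: eq_bigr => x _.
by rewrite /ind; case: (x \in A).
Qed.

Definition ord3 n (t : 'I_n * 'I_n * 'I_n) := (t.1.1 < t.1.2)%N && (t.1.2 < t.2)%N.
Definition Mn n : rat := \sum_(t : 'I_n * 'I_n * 'I_n) ind (ord3 t).

Lemma neq_ord n (i j : 'I_n) : (i < j)%N -> i != j.
Proof. by move=> h; apply/eqP => E; rewrite E ltnn in h. Qed.

Lemma ind_and a b : ind (a && b) = ind a * ind b.
Proof. by rewrite /ind; case: a; case: b; rewrite ?mulr1 ?mulr0. Qed.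

Lemma sum_ind_in (T : finType) (A : {set T}) (F : T -> rat) :
  \sum_x ind (x \in A) * F x = \sum_(x in A) F x.
Proof.
rewrite [RHS]big_mkcond; apply: eq_bigr => x _; rewrite /ind.
by case: (x \in A); rewrite ?mul1r ?mul0r.
Qed.

Lemma ET_er_val n (p : rat) : ET_er n p = Mn n * p ^+ 3.
Proof.
rewrite /ET_er /Mn mulr_suml.
transitivity (\sum_(g : {set 'I_n * 'I_n} | g \subset pairs n)
  \sum_(t : 'I_n * 'I_n * 'I_n) ind (ord3 t) * (er_weight p g *
    ind (((t.1.1, t.1.2) \in g) && ((t.1.2, t.2) \in g) && ((t.1.1, t.2) \in g)))).
  apply: eq_bigr => g Hg; rewrite /triangles card_ind mulr_sumr; apply: eq_bigr => t _.
  rewrite inE /ord3; case: t => [[i j] k] /=.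
  case hij: (i < j)%N; case hjk: (j < k)%N; rewrite /ind /= ?mul0r ?mulr0 //.
  rewrite /er_adj.
  have nin (a b : 'I_n) : (a < b)%N -> ((b, a) \in g) = false.
    move=> hab; apply/negP => /(subsetP Hg); rewrite inE /=; lia.
  have hik : (i < k)%N by lia.
  by rewrite (nin i j hij) (nin j k hjk) (nin i k hik) !orbF ?mul1r andbA.
rewrite exchange_big; apply: eq_bigr => -[[i j] k] _.
rewrite -mulr_sumr /ord3 /=.
have i0 : ind false = 0 by [].
have i1 : ind true = 1 by [].
case hij: (i < j)%N; case hjk: (j < k)%N; rewrite /= ?i0 ?i1 ?mul0r //.
rewrite !mul1r; have hik : (i < k)%N by lia.
apply: er_marg; rewrite ?inE /= ?hij ?hjk ?hik //.
- by apply: contra_neq (neq_ord hij); move=> [E1 E2]; rewrite ?E1 ?E2.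
all: apply/negP; rewrite xpair_eqE; case/andP => /eqP E1 /eqP E2; subst.
all: by rewrite ?ltnn in hij hjk hik.
Qed.

Definition tau K P : rat :=
  \sum_(a in SK K P) \sum_(b in SK K P) \sum_(c in SK K P) Hr a b c.

Lemma ET_rkg_val n K P : (K <= P)%N ->
  ET_rkg n K P = Mn n * tau K P / ('C(P, K))%:R ^+ 3.
Proof.
move=> KP.
pose u (X : {set 'I_P}) := ind (X \in SK K P).
pose S : rat := ('C(P, K))%:R.
have Snz : S != 0 by rewrite /S pnatr_eq0 -lt0n bin_gt0.
have indKA f : ind (f \in key_assignments n K P) = \prod_l u (f l).
  rewrite inE /u; case: (boolP [forall i, _]) => [/forallP H|/forallPn [l Hl]].
    by rewrite big1 // => l _; rewrite /SK inE H.
  by rewrite (bigD1 l) //= /SK inE (negbTE Hl) mul0r.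
have Su : \sum_X u X = S by rewrite /u -card_ind card_SK.
have DenE : \sum_(f : {ffun 'I_n -> {set 'I_P}}) \prod_l u (f l) = S ^+ n.
  rewrite -(bigA_distr_bigA (fun (l : 'I_n) X => u X)) /=; under eq_bigr do rewrite Su.
  by rewrite prodr_const card_ord.
have Den : (#|key_assignments n K P|)%:R = S ^+ n.
  by rewrite card_ind -DenE; apply: eq_bigr => f _; rewrite indKA.
have tauE : \sum_a \sum_b \sum_c u a * u b * u c * Hr a b c = tau K P.
  transitivity (\sum_a u a * \sum_b u b * \sum_c u c * Hr a b c).
    apply: eq_bigr => a _; rewrite mulr_sumr; apply: eq_bigr => b _.
    rewrite !mulr_sumr; apply: eq_bigr => c _; ring.
  rewrite /u sum_ind_in /tau; apply: eq_bigr => a _; rewrite sum_ind_in.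
  by apply: eq_bigr => b _; rewrite sum_ind_in.
have tri f : (triangles (rkg_adj f))%:R = \sum_(t : 'I_n * 'I_n * 'I_n)
    ind (ord3 t) * Hr (f t.1.1) (f t.1.2) (f t.2).
  rewrite /triangles card_ind; apply: eq_bigr => -[[i j] k] _.
  rewrite inE /ord3 /= /rkg_adj /Hr.
  case hij: (i < j)%N; case hjk: (j < k)%N; rewrite /= ?mul0r //.
  have hik : (i < k)%N by lia.
  by rewrite (neq_ord hij) (neq_ord hjk) (neq_ord hik) /= mul1r andbA.
rewrite /ET_rkg Den.
have HNum : \sum_(f in key_assignments n K P) (triangles (rkg_adj f))%:R =
   Mn n * (tau K P * S ^+ n / S ^+ 3).
  rewrite big_mkcond /=.
  transitivity (\sum_(f : {ffun 'I_n -> {set 'I_P}}) \sum_(t : 'I_n * 'I_n * 'I_n)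
      ind (ord3 t) * ((\prod_l u (f l)) * Hr (f t.1.1) (f t.1.2) (f t.2))).
    apply: eq_bigr => f _; rewrite -indKA tri.
    case: (f \in _).
      by apply: eq_bigr => t _; rewrite (_ : ind true = 1) // mul1r.
    by rewrite big1 // => t _; rewrite (_ : ind false = 0) // mul0r mulr0.
  rewrite exchange_big /Mn mulr_suml; apply: eq_bigr => -[[i j] k] _.
  rewrite -mulr_sumr /ord3 /=.
  case hij: (i < j)%N; case hjk: (j < k)%N; rewrite /= ?(_ : ind false = 0) ?mul0r //.
  congr (_ * _); have hik : (i < k)%N by lia.
  have := marg3 (fun _ X => u X) (@Hr P) (neq_ord hij) (neq_ord hjk) (neq_ord hik).
  rewrite /= Su tauE DenE => H.
  apply: (mulIf (x := S ^+ 3)); first by rewrite expf_neq0.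
  rewrite divfK ?expf_neq0 // -H; ring.
rewrite HNum; field; by rewrite -/S Snz expf_neq0.
Qed.


Lemma Mn_gt0 n : (3 <= n)%N -> 0 < Mn n.
Proof.
move=> hn.
have -> : Mn n = (#|[pred t : 'I_n * 'I_n * 'I_n | ord3 t]|)%:R by rewrite card_ind.
rewrite ltr0n; apply/card_gt0P.
have h0 : (0 < n)%N by lia.
have h1 : (1 < n)%N by lia.
have h2 : (2 < n)%N by lia.
by exists (Ordinal h0, Ordinal h1, Ordinal h2).
Qed.

Section NatL.
Local Open Scope nat_scope.
Lemma ffact_ineq m K j : (K <= m)%N -> (j <= K)%N ->
  ((m - K) ^_ j * (m + K) ^_ j + (0 < j) <= (m ^_ j) * (m ^_ j))%N.
Proof.
move=> hKm; elim: j => [|j IH] hj; first by rewrite !ffactn0.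
rewrite !ffactnSr.
have IH' := IH (ltnW hj).
have hC : (0 < m ^_ j)%N by rewrite ffact_gt0; lia.
have hxy : ((m - K - j) * (m + K - j) + 1 <= (m - j) * (m - j))%N.
  case: (leqP (K + j) m) => h.
    have -> : (m - K - j = (m - j) - K)%N by lia.
    have -> : (m + K - j = (m - j) + K)%N by lia.
    have : (K <= m - j)%N by lia.
    move: (m - j) => z hz; nia.
  have -> : (m - K - j = 0)%N by lia.
  have : (0 < m - j)%N by lia.
  move: (m - j) => z hz; nia.
move: IH' hC hxy; move: (m ^_ j) ((m - K) ^_ j) ((m + K) ^_ j) => C A B.
move: (m - K - j)%N (m + K - j)%N (m - j)%N => x y z; nia.
Qed.

Lemma bin_ineq m K : (0 < K)%N -> (K <= m)%N ->
  ('C(m - K, K) * 'C(m + K, K) < 'C(m, K) * 'C(m, K))%N.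
Proof.
move=> hK hKm.
have := ffact_ineq hKm (leqnn K).
rewrite -!bin_ffact (_ : (0 < K)%N = true) //.
have hf : (0 < K`!)%N := fact_gt0 K.
move: ('C(m - K, K)) ('C(m + K, K)) ('C(m, K)) (K`!) hf => a b c f hf H.
have H' : (a * b * (f * f) < c * c * (f * f))%N by nia.
by rewrite ltn_pmul2r ?muln_gt0 ?hf in H'.
Qed.
End NatL.

Theorem mainTheorem16 (K P n : nat) :
  (0 < K)%N -> (K <= P)%N -> 0 < p_th K P -> (3 <= n)%N ->
  let ratio := ET_rkg n K P / ET_er n (p_th K P) in
  let q := q_th K P in
  let r := r_th K P in
  [/\ ratio = CK K P / p_th K P,
      CK K P / p_th K P = 1 + (q ^+ 2 - r) / (1 - q) ^+ 3 * q,
      1 <= ratio,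
      (ratio = 1 <-> (P < 2 * K)%N) &
      ((2 * K <= P)%N -> (P < 3 * K)%N -> ratio = 1 + (q / (1 - q)) ^+ 3)].
Proof.
move=> hK hKP hp hn ratio q r.
have qdef : q_th K P = q by [].
have rdef : r_th K P = r by [].
clearbody q r.
pose S : rat := ('C(P, K))%:R.
pose D1 : rat := ('C(P - K, K))%:R.
pose D2 : rat := ('C(P - 2 * K, K))%:R.
have Spos : 0 < S by rewrite /S ltr0n bin_gt0.
have Snz : S != 0 by rewrite gt_eqF.
have qE : q = D1 / S.
  rewrite -qdef /q_th; case: ifP => h //.
  by rewrite /D1 bin_small ?mul0r //; lia.
have rE : r = D2 / S.
  rewrite -rdef /r_th; case: ifP => h //.
  by rewrite /D2 bin_small ?mul0r //; lia.
have q1p : 0 < 1 - q by move: hp; rewrite /p_th qdef.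
have q1 : 1 - q != 0 by rewrite gt_eqF.
have q0 : 0 <= q by rewrite qE divr_ge0 // ?ler0n // ltW.
have Mnz : Mn n != 0 by rewrite gt_eqF // Mn_gt0.
have ratioE : ratio = (1 - 3 * q + 3 * q ^+ 2 - q * r) / (1 - q) ^+ 3.
  rewrite /ratio ET_rkg_val // ET_er_val /p_th qdef.
  rewrite /tau (@tau_val K P S (q * S) (r * S)) //; last first.
    - by rewrite rE divfK.
    - by rewrite qE divfK.
  rewrite -/S; field; by rewrite Snz Mnz q1.
have Hsmall : (P < 2 * K)%N -> q = 0 /\ r = 0.
  move=> h; rewrite -qdef -rdef /q_th /r_th !ifN //; apply/negP; lia.
have Hbig : (2 * K <= P)%N -> 0 < q /\ r < q ^+ 2.
  move=> h; split.
    by rewrite qE divr_gt0 // /D1 ltr0n bin_gt0; lia.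
  have hineq := @bin_ineq (P - K) K hK (ltac:(lia)).
  rewrite (_ : (P - K - K = P - 2 * K)%N) in hineq; last by lia.
  rewrite (_ : (P - K + K = P)%N) in hineq; last by lia.
  rewrite -subr_gt0 (_ : q ^+ 2 - r = (D1 * D1 - D2 * S) / S ^+ 2); last first.
    by rewrite qE rE; field.
  apply: divr_gt0; last by rewrite exprn_gt0.
  by rewrite subr_gt0 /D1 /D2 /S -!natrM ltr_nat.
have rq : r <= q ^+ 2.
  case: (ltnP P (2 * K)) => h.
    by case: (Hsmall h) => -> ->; rewrite expr0n.
  by case: (Hbig h) => _ /ltW.
have E2 : ratio = 1 + (q ^+ 2 - r) / (1 - q) ^+ 3 * q.
  by rewrite ratioE; field.
split.
- rewrite ratioE /CK /beta_th /p_th qdef rdef; field; by rewrite q1.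
- rewrite -E2 ratioE /CK /beta_th /p_th qdef rdef; field; by rewrite q1.
- rewrite E2 lerDl; apply: mulr_ge0 => //; apply: divr_ge0; first by rewrite subr_ge0.
  by rewrite exprn_ge0 // ltW.
- split.
    move=> h1; case: (ltnP P (2 * K)) => // h.
    case: (Hbig h) => hq hr.
    have : 0 < (q ^+ 2 - r) / (1 - q) ^+ 3 * q.
      by apply: mulr_gt0 => //; apply: divr_gt0; rewrite ?subr_gt0 // exprn_gt0.
    move=> hX; have : ratio - 1 = (q ^+ 2 - r) / (1 - q) ^+ 3 * q by rewrite E2; ring.
    by rewrite h1 subrr => h0; rewrite -h0 ltxx in hX.
  move=> h; rewrite E2; case: (Hsmall h) => -> ->; by rewrite mulr0 addr0.
- move=> h1 h2.
  have r0 : r = 0 by rewrite -rdef /r_th ifN //; apply/negP; lia.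
  rewrite E2 r0; field; by rewrite q1.
Qed.
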